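(* Let $X$ be a countable infinite set, $\mathcal{I}$ a $p^+$ and hereditarily meager ideal on $X$, and $\tau$ an $\mathcal{I}$-crowded topology on $X$ with $\pi w(\tau)<\mathfrak{m}_c$. Suppose $\langle D_i:i\in\omega\rangle$ is a decreasing sequence of $(\mathcal{I},\tau)$-crowded $\tau$-dense subsets of $X$. Then there are finite sets $K_i\subseteq D_i$ ($i\in\omega$) such that $\bigcup_{i\in\omega}K_i$ is $\tau$-dense and $(\mathcal{I},\tau)$-crowded.
   Context: An ideal on $X$ is a family of subsets of $X$ closed under subsets and finite unions; all ideals are assumed proper ($X\notin\mathcal{I}$) and free (every finite subset of $X$ is in $\mathcal{I}$). $\mathcal{I}^+=\mathcal{P}(X)\setminus\mathcal{I}$. Subsets of $X$ are identified with points of $2^X$. $\mathcal{I}$ is hereditarily meager if for every $A\in\mathcal{I}^+$, $\mathcal{I}\cap\mathcal{P}(A)$ is meager in $2^A$. $\mathcal{I}$ is $p^+$ if for every decreasing sequence $(A_n)_n$ of sets in $\mathcal{I}^+$ there is $A\in\mathcal{I}^+$ with $A\setminus A_n$ finite for all $n$. A topology $\tau$ on $X$ is $\mathcal{I}$-crowded if $\tau\cap\mathcal{I}=\{\emptyset\}$. A set $A\subseteq X$ is $(\mathcal{I},\tau)$-crowded if for every $U\in\tau$, $A\cap U$ is either empty or in $\mathcal{I}^+$. $\mathfrak{m}_c$ is the least cardinal $\kappa$ such that MA$(\kappa)$ for countable posets fails. $\pi w$ denotes $\pi$-weight. *)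

(* Defs.v *)
From Stdlib Require Import List.
Import ListNotations.

Definition subset {X : Type} (A B : X -> Prop) : Prop := forall x, A x -> B x.

Definition finite {X : Type} (A : X -> Prop) : Prop :=
  exists l : list X, forall x, A x -> In x l.

Definition countably_infinite (X : Type) : Prop :=
  (exists f : X -> nat, forall x y, f x = f y -> x = y) /\ ~ finite (fun _ : X => True).

Definition is_ideal {X : Type} (I : (X -> Prop) -> Prop) : Prop :=
  (forall A B, I B -> subset A B -> I A) /\
  (forall A B, I A -> I B -> I (fun x => A x \/ B x)) /\
  ~ I (fun _ => True) /\
  (forall A, finite A -> I A).

(* basic clopen set of 2^A given by finite lists s (forced in) and t (forced out) *)
Definition cyl {X : Type} (s t : list X) (B : X -> Prop) : Prop :=
  (forall x, In x s -> B x) /\ (forall x, In x t -> ~ B x).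

Definition cond_in {X : Type} (A : X -> Prop) (s t : list X) : Prop :=
  (forall x, In x s -> A x) /\ (forall x, In x t -> A x) /\
  (forall x, In x s -> In x t -> False).

(* N is nowhere dense in 2^A: every nonempty basic open set has a nonempty
   basic open subset disjoint from N *)
Definition nowhere_dense_in {X : Type} (A : X -> Prop) (N : (X -> Prop) -> Prop) : Prop :=
  forall s t, cond_in A s t ->
    exists s' t', cond_in A s' t' /\ incl s s' /\ incl t t' /\
      forall B, subset B A -> cyl s' t' B -> ~ N B.

Definition meager_in {X : Type} (A : X -> Prop) (M : (X -> Prop) -> Prop) : Prop :=
  exists N : nat -> (X -> Prop) -> Prop,
    (forall n, nowhere_dense_in A (N n)) /\
    forall B, subset B A -> M B -> exists n, N n B.

Definition hereditarily_meager {X : Type} (I : (X -> Prop) -> Prop) : Prop :=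
  forall A, ~ I A -> meager_in A (fun B => subset B A /\ I B).

Definition p_plus {X : Type} (I : (X -> Prop) -> Prop) : Prop :=
  forall An : nat -> X -> Prop,
    (forall n, ~ I (An n)) -> (forall n, subset (An (S n)) (An n)) ->
    exists A, ~ I A /\ forall n, finite (fun x => A x /\ ~ An n x).

Definition is_topology {X : Type} (tau : (X -> Prop) -> Prop) : Prop :=
  tau (fun _ => False) /\ tau (fun _ => True) /\
  (forall U V, tau U -> tau V -> tau (fun x => U x /\ V x)) /\
  (forall F : (X -> Prop) -> Prop, (forall U, F U -> tau U) ->
     tau (fun x => exists U, F U /\ U x)).

Definition nonempty {X : Type} (A : X -> Prop) : Prop := exists x, A x.

Definition I_crowded_topology {X : Type} (I tau : (X -> Prop) -> Prop) : Prop :=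
  forall U, tau U -> I U -> forall x, ~ U x.

Definition I_tau_crowded {X : Type} (I tau : (X -> Prop) -> Prop) (A : X -> Prop) : Prop :=
  forall U, tau U -> (forall x, ~ (A x /\ U x)) \/ ~ I (fun x => A x /\ U x).

Definition dense {X : Type} (tau : (X -> Prop) -> Prop) (A : X -> Prop) : Prop :=
  forall U, tau U -> nonempty U -> exists x, A x /\ U x.

Definition is_pi_base {X J : Type} (tau : (X -> Prop) -> Prop) (B : J -> X -> Prop) : Prop :=
  (forall j, tau (B j) /\ nonempty (B j)) /\
  (forall U, tau U -> nonempty U -> exists j, subset (B j) U).

Definition is_poset {P : Type} (le : P -> P -> Prop) : Prop :=
  (forall p, le p p) /\ (forall p q r, le p q -> le q r -> le p r) /\
  (forall p q, le p q -> le q p -> p = q).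

Definition countable_type (P : Type) : Prop :=
  exists f : P -> nat, forall x y, f x = f y -> x = y.

Definition dense_in_poset {P : Type} (le : P -> P -> Prop) (D : P -> Prop) : Prop :=
  forall p, exists q, le q p /\ D q.

Definition is_filter {P : Type} (le : P -> P -> Prop) (G : P -> Prop) : Prop :=
  (exists p, G p) /\ (forall p q, G p -> le p q -> G q) /\
  (forall p q, G p -> G q -> exists r, G r /\ le r p /\ le r q).

(* MA(|J|) for countable posets: every family of (at most) |J| dense subsets
   of a nonempty countable poset is met by a filter *)
Definition MA_countable (J : Type) : Prop :=
  forall (P : Type) (le : P -> P -> Prop),
    is_poset le -> countable_type P -> inhabited P ->
    forall D : J -> P -> Prop, (forall j, dense_in_poset le (D j)) ->
    exists G, is_filter le G /\ forall j, exists p, G p /\ D j p.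

(* pi w(tau) < m_c  <->  MA(pi w(tau)) for countable posets holds
   <-> some pi-base B of tau satisfies MA(|B|)  (MA(kappa) is downward monotone) *)
Definition piweight_lt_mc {X : Type} (tau : (X -> Prop) -> Prop) : Prop :=
  exists (J : Type) (B : J -> X -> Prop), is_pi_base tau B /\ MA_countable J.

(* Main.v *)
Require Import Defs.
From Stdlib Require Import List Arith Lia Classical ClassicalEpsilon Cantor.
From mathcomp Require classical_sets boolp.
Import ListNotations.

Lemma zorn_plain (T : Type) (P : (T -> Prop) -> Prop) :
 (forall F : (T->Prop) -> Prop, (forall A, F A -> P A) ->
    (forall A B, F A -> F B -> (forall x, A x -> B x) \/ (forall x, B x -> A x)) ->
    P (fun x => exists A, F A /\ A x)) ->
 exists A, P A /\ forall B, (forall x, A x -> B x) -> ~ (forall x, B x -> A x) -> ~ P B.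
Proof.
intros H.
destruct (@classical_sets.Zorn_bigcup T P) as [A [PA HA]].
- intros F HF Ht.
  assert (E : classical_sets.bigcup F (fun X => X) = (fun x => exists A, F A /\ A x)).
  { apply boolp.funext; intro x; apply boolp.propext; split.
    - intros [A FA Ax]; eauto.
    - intros [A [FA Ax]]; exists A; auto. }
  rewrite E; apply H; auto.
- exists A; split; auto. intros B h1 h2 PB. apply (HA B); auto. split; auto.
Qed.

Lemma inf_inj (J : Type) (Q : J -> Prop) :
  ~ (exists L : list J, forall j, Q j -> In j L) ->
  exists g : nat -> J, (forall n, Q (g n)) /\ (forall n m, g n = g m -> n = m).
Proof.
intro H.
assert (H1 : forall l : list J, exists x, Q x /\ ~ In x l).
{ intro l. apply NNPP; intro C. apply H. exists l. intros j Qj.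
  apply NNPP; intro C2. apply C; eauto. }
pose (pick := fun l => proj1_sig (constructive_indefinite_description _ (H1 l))).
assert (Hp : forall l, Q (pick l) /\ ~ In (pick l) l).
{ intro l; exact (proj2_sig (constructive_indefinite_description _ (H1 l))). }
pose (sq := fix f (n : nat) : list J := match n with 0 => [] | S k => pick (f k) :: f k end).
assert (Hinc : forall n m, n <= m -> incl (sq n) (sq m)).
{ intros n m Hnm; induction Hnm. apply incl_refl.
  simpl. apply incl_tl. auto. }
exists (fun n => pick (sq n)); split.
- intro n; apply Hp.
- assert (K : forall n m, n < m -> pick (sq n) <> pick (sq m)).
  { intros n m Hnm E. apply (proj2 (Hp (sq m))). apply (Hinc (S n) m Hnm).
    simpl. left. exact E. }
  intros n m E. destruct (Nat.lt_trichotomy n m) as [h|[h|h]]; auto.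
  + exfalso; apply (K n m h E).
  + exfalso; apply (K m n h); auto.
Qed.

Section Card.
Variable J : Type.

Definition good (Phi : (J * nat) * J -> Prop) : Prop :=
 (forall a y y', Phi (a,y) -> Phi (a,y') -> y = y') /\
 (forall a a' y, Phi (a,y) -> Phi (a',y) -> a = a') /\
 (forall j m z m', Phi ((j,m),z) -> exists z', Phi ((j,m'),z')) /\
 (forall a y, Phi (a,y) -> exists m z, Phi ((y,m),z)) /\
 (forall j m z, Phi ((j,m),z) -> exists a, Phi (a,j)).

Lemma card_split :
  (exists L : list J, forall j, In j L) \/
  (exists h : J -> J * nat, forall jm, exists j, h j = jm).
Proof.
destruct (@zorn_plain _ good) as [Phi [[G1 [G2 [G3 [G4 G5]]]] Hmax]].
{ intros F HF Ht. repeat split.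
  - intros a y y' [A [FA HA]] [B [FB HB]].
    destruct (Ht A B FA FB) as [h|h].
    + apply (proj1 (HF B FB) a); auto.
    + apply (proj1 (HF A FA) a); auto.
  - intros a a' y [A [FA HA]] [B [FB HB]].
    destruct (Ht A B FA FB) as [h|h].
    + apply (proj1 (proj2 (HF B FB)) a a' y); auto.
    + apply (proj1 (proj2 (HF A FA)) a a' y); auto.
  - intros j m z m' [A [FA HA]].
    destruct (proj1 (proj2 (proj2 (HF A FA))) j m z m' HA) as [z' Hz'].
    eauto.
  - intros a y [A [FA HA]].
    destruct (proj1 (proj2 (proj2 (proj2 (HF A FA)))) a y HA) as [m [z Hz]].
    eauto.
  - intros j m z [A [FA HA]].
    destruct (proj2 (proj2 (proj2 (proj2 (HF A FA)))) j m z HA) as [a Ha].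
    eauto. }
set (S0 := fun j => exists m z, Phi ((j,m),z)).
assert (HL : exists L : list J, forall j, ~ S0 j -> In j L).
{ apply NNPP; intro C. destruct (@inf_inj _ (fun j => ~ S0 j) C) as [g [Hg Hgi]].
  set (Phi' := fun p : (J*nat)*J => Phi p \/
     exists a m, p = ((g a, m), g (to_nat (a,m)))).
  apply (Hmax Phi').
  - intros x Hx; left; exact Hx.
  - intro Hsub. assert (Hin : Phi ((g 0, 0), g (to_nat (0,0)))).
    { apply Hsub. right; eauto. }
    apply (Hg 0). exists 0, (g (to_nat (0,0))). assumption.
  - repeat split.
    + intros a y y' [h|[b [m E]]] [h'|[b' [m' E']]].
      * eauto.
      * apply pair_equal_spec in E' as [E1 E2]. subst.
        exfalso; apply (Hg b'); exists m', y; auto.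
      * apply pair_equal_spec in E as [E1 E2]. subst.
        exfalso; apply (Hg b); exists m, y'; auto.
      * apply pair_equal_spec in E as [E1 E2]. apply pair_equal_spec in E' as [E1' E2'].
        rewrite E1 in E1'. apply pair_equal_spec in E1' as [E3 E4].
        apply Hgi in E3. subst. reflexivity.
    + intros a a' y [h|[b [m E]]] [h'|[b' [m' E']]].
      * eauto.
      * apply pair_equal_spec in E' as [E1 E2]. subst. exfalso.
        destruct (G4 _ _ h) as [k [z Hz]]. apply (Hg (to_nat (b',m'))). exists k, z; auto.
      * apply pair_equal_spec in E as [E1 E2]. subst. exfalso.
        destruct (G4 _ _ h') as [k [z Hz]]. apply (Hg (to_nat (b,m))). exists k, z; auto.
      * apply pair_equal_spec in E as [E1 E2]. apply pair_equal_spec in E' as [E1' E2'].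
        rewrite E2 in E2'. apply Hgi in E2'.
        assert (Eq : (b,m) = (b',m')) by (rewrite <- (cancel_of_to (b,m)), E2'; apply cancel_of_to).
        apply pair_equal_spec in Eq as [Eq1 Eq2]. subst. reflexivity.
    + intros j m z m' [h|[b [k E]]].
      * destruct (G3 _ _ _ m' h) as [z' Hz']. exists z'; left; auto.
      * apply pair_equal_spec in E as [E1 E2]. apply pair_equal_spec in E1 as [E3 E4]. subst.
        exists (g (to_nat (b,m'))). right; eauto.
    + intros a y [h|[b [k E]]].
      * destruct (G4 _ _ h) as [m [z Hz]]. exists m, z; left; auto.
      * apply pair_equal_spec in E as [E1 E2]. subst.
        exists 0, (g (to_nat (to_nat (b,k), 0))). right; eauto.
    + intros j m z [h|[b [k E]]].
      * destruct (G5 _ _ _ h) as [a Ha]. exists a; left; auto.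
      * apply pair_equal_spec in E as [E1 E2]. apply pair_equal_spec in E1 as [E3 E4]. subst.
        destruct (of_nat b) as [c d] eqn:Eb.
        exists (g c, d). right. exists c, d. rewrite <- Eb, cancel_to_of. auto. }
destruct HL as [L HL].
destruct (classic (exists j0, S0 j0)) as [[j0 Hj0]|Hn].
2:{ left; exists L; intros j; apply HL; intro; apply Hn; eauto. }
right.
assert (Hpsi : forall y, exists a, S0 y -> Phi (a, y)).
{ intro y. destruct (classic (S0 y)) as [h|h].
  - destruct h as [m [z Hz]]. destruct (G5 _ _ _ Hz) as [a Ha]. exists a; auto.
  - exists ((j0,0)); intro; contradiction. }
pose (psi := fun y => proj1_sig (constructive_indefinite_description _ (Hpsi y))).
assert (Hpsi' : forall y, S0 y -> Phi (psi y, y)).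
{ intro y; exact (proj2_sig (constructive_indefinite_description _ (Hpsi y))). }
exists (fun y => let (j', m) := psi y in
          if Nat.even m then (j', Nat.div2 m)
          else let (i,k) := of_nat (Nat.div2 m) in (nth i L j0, k)).
intros [y k].
assert (Hz : forall j m, S0 j -> exists z, Phi ((j,m),z)).
{ intros j m [m0 [z0 Hz0]]. exact (G3 _ _ _ m Hz0). }
destruct (classic (S0 y)) as [Sy|Sy].
- destruct (Hz y (2*k) Sy) as [z Phz].
  exists z.
  assert (Sz : S0 z) by (exact (G4 _ _ Phz)).
  assert (E : psi z = (y, 2*k)) by (apply (G2 _ _ z); auto).
  rewrite E. assert (He : Nat.even (2*k) = true) by (apply Nat.even_spec; exists k; lia). rewrite He, Nat.div2_double. auto.
- apply HL in Sy. destruct (In_nth L y j0 Sy) as [i [Hi Ei]].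
  destruct (Hz j0 (S (2 * to_nat (i,k))) Hj0) as [z Phz].
  exists z.
  assert (Sz : S0 z) by (exact (G4 _ _ Phz)).
  assert (E : psi z = (j0, S (2 * to_nat (i,k)))) by (apply (G2 _ _ z); auto).
  rewrite E. assert (He : Nat.even (S (2*to_nat (i,k))) = false).
  { rewrite Nat.even_succ, <- Nat.negb_even, Nat.even_mul. reflexivity. }
  rewrite He, Nat.div2_succ_double, cancel_of_to. rewrite Ei; auto.
Qed.
End Card.

Lemma MA_nat : MA_countable nat.
Proof.
intros P le [Hr [Ht Ha]] _ [p0] D HD.
pose (step := fun n p => proj1_sig (constructive_indefinite_description _ (HD n p))).
assert (Hst : forall n p, le (step n p) p /\ D n (step n p)).
{ intros n p; exact (proj2_sig (constructive_indefinite_description _ (HD n p))). }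
pose (sq := fix f (n : nat) : P := match n with 0 => p0 | S k => step k (f k) end).
assert (Hdec : forall n m, n <= m -> le (sq m) (sq n)).
{ intros n m Hnm; induction Hnm. apply Hr. eapply Ht; [apply Hst|exact IHHnm]. }
exists (fun p => exists n, le (sq n) p). split; [split; [|split]|].
- exists p0, 0. apply Hr.
- intros p q [n Hn] Hpq. exists n. eapply Ht; eauto.
- intros p q [n Hn] [m Hm]. exists (sq (max n m)). split.
  + exists (max n m); apply Hr.
  + split; [apply (Ht _ (sq n) _)|apply (Ht _ (sq m) _)]; auto; apply Hdec; lia.
- intro n. exists (sq (S n)). split. exists (S n); apply Hr. apply Hst.
Qed.

Lemma MA_surj (A B : Type) (h : A -> B) :
  (forall b, exists a, h a = b) -> MA_countable A -> MA_countable B.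
Proof.
intros Hs HA P le Hp Hc Hi D HD.
destruct (HA P le Hp Hc Hi (fun a => D (h a)) (fun a => HD (h a))) as [G [HG HM]].
exists G; split; auto. intros b; destruct (Hs b) as [a <-]; apply HM.
Qed.

Lemma MA_prod (J : Type) (j0 : J) : MA_countable J -> MA_countable (J * nat).
Proof.
intro HJ. destruct (card_split J) as [[L HL]|[h Hh]].
- apply (MA_surj nat (J*nat) (fun n => let (i,k) := of_nat n in (nth i L j0, k))).
  + intros [y k]. destruct (In_nth L y j0 (HL y)) as [i [_ Ei]].
    exists (to_nat (i,k)). rewrite cancel_of_to, Ei. auto.
  + apply MA_nat.
- apply (MA_surj J (J*nat) h); auto.
Qed.

Definition dec (Q : Prop) : bool := if excluded_middle_informative Q then true else false.
Lemma dec_true (Q : Prop) : dec Q = true <-> Q.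
Proof. unfold dec; destruct (excluded_middle_informative Q); split; intros; auto; discriminate. Qed.

Lemma in_filter_dec {X} (Q : X -> Prop) l x : In x (filter (fun y => dec (Q y)) l) <-> In x l /\ Q x.
Proof. rewrite filter_In, dec_true. tauto. Qed.

Lemma finite_sub {X} (A B : X -> Prop) : finite B -> subset A B -> finite A.
Proof. intros [l Hl] H; exists l; auto. Qed.

Section Main.
Variables (X : Type) (I tau : (X -> Prop) -> Prop) (D : nat -> X -> Prop).
Hypothesis HI : is_ideal I.
Hypothesis Hpp : p_plus I.
Hypothesis Hhm : hereditarily_meager I.
Hypothesis Htop : is_topology tau.
Hypothesis HDd : forall i, subset (D (S i)) (D i).
Hypothesis HDc : forall i, I_tau_crowded I tau (D i) /\ dense tau (D i).
Variables (J : Type) (Bj : J -> X -> Prop).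
Hypothesis HB : is_pi_base tau Bj.

Lemma I_sub A B : I B -> subset A B -> I A.
Proof. destruct HI as [h _]; eauto. Qed.
Lemma I_union A B : I A -> I B -> I (fun x => A x \/ B x).
Proof. destruct HI as [_ [h _]]; eauto. Qed.
Lemma I_fin A : finite A -> I A.
Proof. destruct HI as [_ [_ [_ h]]]; eauto. Qed.

Lemma pos_split A C F : ~ I A -> finite F -> subset A (fun x => C x \/ F x) -> ~ I C.
Proof. intros hA hF hs hC. apply hA. eapply I_sub; [apply I_union; [exact hC|apply I_fin; exact hF]|exact hs]. Qed.

Lemma Dmono n m : n <= m -> subset (D m) (D n).
Proof. intro h; induction h; intros x Hx; auto. apply IHh, HDd, Hx. Qed.

Lemma exA j : exists A, ~ I A /\ subset A (fun x => Bj j x /\ D 0 x) /\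
   forall n, finite (fun x => A x /\ ~ D n x).
Proof.
destruct HB as [HB1 HB2]. destruct (HB1 j) as [Hop Hne].
set (An := fun n x => Bj j x /\ D n x).
assert (Hpos : forall n, ~ I (An n)).
{ intros n HIn. destruct (proj1 (HDc n) (Bj j) Hop) as [h|h].
  - destruct (proj2 (HDc n) (Bj j) Hop Hne) as [x Hx]. apply (h x); exact Hx.
  - apply h. eapply I_sub; [exact HIn|]. intros x [a b]; split; auto. }
destruct (Hpp An Hpos) as [A0 [HA0 HA0f]].
{ intros n x [a b]; split; auto. apply HDd; auto. }
exists (fun x => A0 x /\ Bj j x /\ D 0 x). split; [|split].
- apply (pos_split A0 _ (fun x => A0 x /\ ~ An 0 x)); auto.
  intros x Hx. destruct (classic (An 0 x)) as [[a b]|h]; [left|right]; auto.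
- intros x [_ [a b]]; split; auto.
- intro n. eapply finite_sub; [apply (HA0f n)|]. intros x [[a [b c]] d]. split; auto.
  intros [_ e]; auto.
Qed.

Definition Aj j := proj1_sig (constructive_indefinite_description _ (exA j)).
Lemma Aj_spec j : ~ I (Aj j) /\ subset (Aj j) (fun x => Bj j x /\ D 0 x) /\
   forall n, finite (fun x => Aj j x /\ ~ D n x).
Proof. exact (proj2_sig (constructive_indefinite_description _ (exA j))). Qed.

Definition Nj j := proj1_sig (constructive_indefinite_description _ (Hhm (Aj j) (proj1 (Aj_spec j)))).
Lemma Nj_spec j : (forall n, nowhere_dense_in (Aj j) (Nj j n)) /\
    forall B, subset B (Aj j) -> (subset B (Aj j) /\ I B) -> exists n, Nj j n B.
Proof. exact (proj2_sig (constructive_indefinite_description _ (Hhm (Aj j) (proj1 (Aj_spec j))))). Qed.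

Definition PP := (list X * list X * nat)%type.
Definition sP (p : PP) := fst (fst p).
Definition tP (p : PP) := snd (fst p).
Definition nP (p : PP) := snd p.

Definition RR (q p : PP) : Prop :=
  nP p < nP q /\ incl (sP p) (sP q) /\ incl (tP p) (tP q) /\
  forall x, In x (sP q) -> ~ In x (sP p) -> D (nP p) x /\ ~ In x (tP p).
Definition lePP (q p : PP) : Prop := q = p \/ RR q p.

Lemma RR_trans r q p : RR r q -> RR q p -> RR r p.
Proof.
intros [a1 [b1 [c1 d1]]] [a2 [b2 [c2 d2]]]. split; [lia|split; [|split]].
- eapply incl_tran; eauto.
- eapply incl_tran; eauto.
- intros x Hr Hp. destruct (classic (In x (sP q))) as [h|h].
  + apply d2; auto.
  + destruct (d1 x Hr h) as [e f]. split.
    * apply (Dmono (nP p) (nP q)); [lia|auto].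
    * intro; apply f; apply c2; auto.
Qed.

Lemma poset_PP : is_poset lePP.
Proof.
split; [|split].
- intro; left; auto.
- intros p q r [h|h] [h'|h']; subst; unfold lePP; auto. right; eapply RR_trans; eauto.
- intros p q [h|h] [h'|h']; auto. destruct h as [a _], h' as [b _]; lia.
Qed.

Lemma le_incl r q : lePP r q -> incl (sP q) (sP r).
Proof. intros [h|h]; [subst; apply incl_refl|apply h]. Qed.


Variable fX : X -> nat.
Hypothesis HfX : forall x y, fX x = fX y -> x = y.

Fixpoint code_list (l : list X) : nat :=
  match l with [] => 0 | x :: l' => S (to_nat (fX x, code_list l')) end.

Lemma code_list_inj l1 l2 : code_list l1 = code_list l2 -> l1 = l2.
Proof.
revert l2; induction l1 as [|x l1 IH]; intros [|y l2]; cbn [code_list]; intro h; try discriminate; auto.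
apply Nat.succ_inj in h as h'.
assert (E : (fX x, code_list l1) = (fX y, code_list l2)) by
  (rewrite <- (cancel_of_to (fX x, code_list l1)), h'; apply cancel_of_to).
apply pair_equal_spec in E as [E1 E2]. apply HfX in E1. apply IH in E2. subst; auto.
Qed.

Lemma countable_PP : countable_type PP.
Proof.
exists (fun p => to_nat (to_nat (code_list (sP p), code_list (tP p)), nP p)).
intros [[s1 t1] n1] [[s2 t2] n2]; unfold sP, tP, nP; cbn [fst snd]; intro h.
assert (E : (to_nat (code_list s1, code_list t1), n1) = (to_nat (code_list s2, code_list t2), n2)) by
  (rewrite <- (cancel_of_to (to_nat (code_list s1, code_list t1), n1)), h; apply cancel_of_to).
apply pair_equal_spec in E as [E1 E2].
assert (E3 : (code_list s1, code_list t1) = (code_list s2, code_list t2)) by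
  (rewrite <- (cancel_of_to (code_list s1, code_list t1)), E1; apply cancel_of_to).
apply pair_equal_spec in E3 as [E4 E5].
apply code_list_inj in E4; apply code_list_inj in E5; subst; auto.
Qed.

Definition Dd (jm : J * nat) (q : PP) : Prop :=
  let (j, m) := jm in
  m <= nP q /\ exists s' t',
    (forall x, In x s' -> In x (sP q) /\ Aj j x) /\
    (forall x, In x t' -> In x (tP q) /\ ~ In x (sP q)) /\
    forall Bs, subset Bs (Aj j) -> cyl s' t' Bs -> ~ Nj j m Bs.

Lemma Dd_dense jm : dense_in_poset lePP (Dd jm).
Proof.
destruct jm as [j m]. intros [[s t] n].
destruct (proj2 (proj2 (Aj_spec j)) n) as [l Hl].
set (s0 := filter (fun x => dec (Aj j x)) s).
set (t0 := filter (fun x => dec (Aj j x /\ ~ In x s /\ (In x t \/ ~ D n x))) (t ++ l)).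
destruct (proj1 (Nj_spec j) m s0 t0) as [s' [t' [[c1 [c2 c3]] [i1 [i2 Hav]]]]].
{ split; [|split].
  - intros x Hx; apply in_filter_dec in Hx; tauto.
  - intros x Hx; apply in_filter_dec in Hx; tauto.
  - intros x h1 h2; apply in_filter_dec in h1; apply in_filter_dec in h2; tauto. }
exists ((s ++ s', t ++ t'), n + m + 1). split.
- right. unfold RR, sP, tP, nP; simpl. split; [lia|split; [apply incl_appl, incl_refl|split; [apply incl_appl, incl_refl|]]].
  intros x Hx Hns. apply in_app_or in Hx as [Hx|Hx]; [contradiction|].
  assert (Ax : Aj j x) by auto.
  assert (Nt : ~ In x t') by (intro; apply (c3 x); auto).
  destruct (classic (D n x /\ ~ In x t)) as [h|h]; auto. exfalso. apply Nt, i2.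
  apply in_filter_dec. split.
  + apply in_or_app. destruct (classic (In x t)) as [h'|h']; [left; auto|right; apply Hl; split; auto].
  + refine (conj Ax (conj Hns _)). destruct (classic (In x t)) as [h'|h']; [left; auto|right; intro h''; apply h; split; auto].
- unfold Dd, sP, tP, nP; simpl. split; [lia|]. exists s', t'. split; [|split].
  + intros x Hx; split; auto. apply in_or_app; right; auto.
  + intros x Hx; split. apply in_or_app; right; auto.
    intro h. apply in_app_or in h as [h|h].
    * apply (c3 x); auto. apply i1. apply in_filter_dec; split; auto.
    * apply (c3 x); auto.
  + exact Hav.
Qed.


Variable G : PP -> Prop.
Hypothesis HGf : is_filter lePP G.
Hypothesis HGm : forall jm, exists p, G p /\ Dd jm p.
Variable j0 : J.

Lemma G_common p q : G p -> G q -> exists r, G r /\ lePP r p /\ lePP r q.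
Proof. destruct HGf as [_ [_ h]]; auto. Qed.

Lemma G_out p q x : G p -> In x (tP p) -> ~ In x (sP p) -> G q -> ~ In x (sP q).
Proof.
intros Gp Ht Hs Gq Hq. destruct (G_common p q Gp Gq) as [r [Gr [Hrp Hrq]]].
assert (Hr : In x (sP r)) by (apply (le_incl r q); auto).
destruct Hrp as [E|Hrp]; [subst; contradiction|].
destruct Hrp as [_ [_ [_ h]]]. destruct (h x Hr Hs); contradiction.
Qed.

Lemma G_tail p q x : G p -> G q -> In x (sP q) -> ~ In x (sP p) -> D (nP p) x.
Proof.
intros Gp Gq Hq Hs. destruct (G_common p q Gp Gq) as [r [Gr [Hrp Hrq]]].
assert (Hr : In x (sP r)) by (apply (le_incl r q); auto).
destruct Hrp as [E|Hrp]; [subst; contradiction|].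
destruct Hrp as [_ [_ [_ h]]]. destruct (h x Hr Hs); auto.
Qed.

Definition K0 x := D 0 x /\ exists q, G q /\ In x (sP q).

Lemma K0_pseudo k : finite (fun x => K0 x /\ ~ D k x).
Proof.
destruct (HGm (j0, k)) as [p [Gp [Hk _]]].
exists (sP p). intros x [[_ [q [Gq Hq]]] Hn].
apply NNPP; intro Hs. apply Hn. apply (Dmono k (nP p)); auto.
eapply G_tail; eauto.
Qed.

Lemma K0_pos j : ~ I (fun x => K0 x /\ Aj j x).
Proof.
intro HIK. destruct (proj2 (Nj_spec j) (fun x => K0 x /\ Aj j x)) as [m Hm].
{ intros x [_ h]; auto. }
{ split; auto. intros x [_ h]; auto. }
destruct (HGm (j, m)) as [q [Gq [_ [s' [t' [h1 [h2 h3]]]]]]].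
apply (h3 (fun x => K0 x /\ Aj j x) (fun x (h : K0 x /\ Aj j x) => proj2 h)); auto. split.
- intros x Hx. destruct (h1 x Hx) as [a b]. split; auto. split.
  + apply (proj2 (proj1 (proj2 (Aj_spec j)) x b)).
  + eauto.
- intros x Hx [[_ [q' [Gq' Hq']]] _]. destruct (h2 x Hx) as [a b].
  apply (G_out q q' x); auto.
Qed.

Lemma K0_dense : dense tau K0.
Proof.
intros U HU Hne. destruct (proj2 HB U HU Hne) as [j Hj].
apply NNPP; intro C. apply (K0_pos j). apply I_fin. exists []. intros x [a b].
exfalso; apply C; exists x; split; auto. apply Hj. apply (proj1 (proj1 (proj2 (Aj_spec j)) x b)).
Qed.

Lemma K0_crowded : I_tau_crowded I tau K0.
Proof.
intros U HU. destruct (classic (exists x, K0 x /\ U x)) as [[x [a b]]|h].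
- right. intro HIK. destruct (proj2 HB U HU (ex_intro _ x b)) as [j Hj].
  apply (K0_pos j). eapply I_sub; [exact HIK|]. intros y [c d]. split; auto.
  apply Hj. apply (proj1 (proj1 (proj2 (Aj_spec j)) y d)).
- left. intros y hy; apply h; eauto.
Qed.

End Main.

Lemma level {X} (D : nat -> X -> Prop) x n : D 0 x -> ~ D n x -> exists i, D i x /\ ~ D (S i) x.
Proof.
intros H0; induction n as [|n IH]; intro Hn; [contradiction|].
destruct (classic (D n x)) as [h|h]; eauto.
Qed.

Lemma decompose (X : Type) (D : nat -> X -> Prop) (fX : X -> nat)
  (HfX : forall x y, fX x = fX y -> x = y) (K0 : X -> Prop) :
  (forall x, K0 x -> D 0 x) -> (forall k, finite (fun x => K0 x /\ ~ D k x)) ->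
  exists K : nat -> list X, (forall i x, In x (K i) -> D i x) /\
     forall x, (exists i, In x (K i)) <-> K0 x.
Proof.
intros H0 Hf.
assert (Hy : forall i, exists l : list X, forall x, fX x = i -> In x l).
{ intro i. destruct (classic (exists x, fX x = i)) as [[x0 Hx0]|h].
  - exists [x0]. intros x Hx. left. apply HfX. congruence.
  - exists []. intros x Hx. apply h; eauto. }
pose (ym := fun i => proj1_sig (constructive_indefinite_description _ (Hy i))).
pose (Lf := fun i => proj1_sig (constructive_indefinite_description _ (Hf (S i)))).
exists (fun i => filter (fun x => dec (K0 x /\ D i x)) (Lf i ++ ym i)). split.
- intros i x Hx. apply in_filter_dec in Hx. tauto.
- intro x; split.
  + intros [i Hi]. apply in_filter_dec in Hi. tauto.
  + intro Kx. destruct (classic (forall n, D n x)) as [h|h].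
    * exists (fX x). apply in_filter_dec. split; auto. apply in_or_app; right.
      exact (proj2_sig (constructive_indefinite_description _ (Hy (fX x))) x eq_refl).
    * apply not_all_ex_not in h as [n hn]. destruct (level D x n (H0 x Kx) hn) as [i [a b]].
      exists i. apply in_filter_dec. split; auto. apply in_or_app; left.
      exact (proj2_sig (constructive_indefinite_description _ (Hf (S i))) x (conj Kx b)).
Qed.

Theorem mainTheorem6 (X : Type) (I tau : (X -> Prop) -> Prop) (D : nat -> X -> Prop) :
  countably_infinite X ->
  is_ideal I -> p_plus I -> hereditarily_meager I ->
  is_topology tau -> I_crowded_topology I tau -> piweight_lt_mc tau ->
  (forall i, subset (D (S i)) (D i)) ->
  (forall i, I_tau_crowded I tau (D i) /\ dense tau (D i)) ->
  exists K : nat -> list X,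
    (forall i x, In x (K i) -> D i x) /\
    dense tau (fun x => exists i, In x (K i)) /\
    I_tau_crowded I tau (fun x => exists i, In x (K i)).
Proof.
intros [[fX HfX] Hinf] HI Hpp Hhm Htop Hct [J [Bj [HB HMA]]] HDd HDc.
assert (Hx : exists x : X, True).
{ apply NNPP; intro C. apply Hinf. exists []. intros x _. apply C; eauto. }
destruct Hx as [x0 _].
destruct (proj2 HB (fun _ => True) (proj1 (proj2 Htop)) (ex_intro _ x0 Logic.I)) as [j0 _].
destruct (MA_prod J j0 HMA (PP X) (lePP X D) (poset_PP X D HDd) (countable_PP X fX HfX)
   (inhabits (([],[],0) : PP X)) _ (Dd_dense X I tau D HI Hpp Hhm HDd HDc J Bj HB))
  as [G [HGf HGm]].
set (K0' := K0 X D G).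
destruct (decompose X D fX HfX K0') as [K [HK1 HK2]].
{ intros x [a _]; auto. }
{ exact (K0_pseudo X I tau D HI Hpp Hhm HDd HDc J Bj HB G HGf HGm j0). }
exists K. split; auto. split.
- intros U HU Hne. destruct (K0_dense X I tau D HI Hpp Hhm HDd HDc J Bj HB G HGf HGm U HU Hne) as [x [a b]].
  exists x; split; auto. apply HK2; exact a.
- intros U HU. destruct (K0_crowded X I tau D HI Hpp Hhm HDd HDc J Bj HB G HGf HGm U HU) as [h|h].
  + left. intros x [a b]. apply (h x); split; auto. apply HK2; auto.
  + right. intro C. apply h. apply (proj1 HI _ _ C).
    intros x [a b]; split; auto. apply HK2; auto.
Qed.
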